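(* Let $A,B\subseteq\mathbb N$ satisfy condition $( * )$. Then for every infinite set $X\subseteq D_A$, every function $f:X\to D_B$, and every $n>1$, there are distinct $x,y\in X$ such that either $d_3(f(x),f(y))/d_3(x,y)>n$ or $d_3(f(x),f(y))/d_3(x,y)<1/n$.
   Context: $2^{\mathbb N}$ is the set of infinite binary sequences. For distinct $\eta,\nu\in 2^{\mathbb N}$ let $\Delta(\eta,\nu)$ be the least $m$ with $\eta(m)\ne\nu(m)$, and $d_3(\eta,\nu)=3^{-\Delta(\eta,\nu)}$ ($d_3(\eta,\eta)=0$). For infinite $A\subseteq\mathbb N$, $T_A\subseteq 2^{<\mathbb N}$ is the tree defined inductively: it contains the empty sequence, and for each $\eta\in T_A$ it contains both $\eta^\frown 0$ and $\eta^\frown 1$ if the length $|\eta|\in A$, and only $\eta^\frown 0$ if $|\eta|\notin A$. $D_A\subseteq 2^{\mathbb N}$ is the set of infinite branches of $T_A$, with metric $d_3$. Condition $( * )$ for $A,B\subseteq\mathbb N$: $|A|=|B|=\aleph_0$ and for every $n$ there is $k$ such that for all $a\in A$, $b\in B$ with $a,b>k$, either $a/b>n$ or $b/a>n$. *)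

(* Defs.v *)
From Stdlib Require Import Reals List Lia ClassicalEpsilon.
Open Scope R_scope.

Definition seq2 := nat -> bool.

(* Delta(eta,nu): least m with eta m <> nu m (meaningful for eta <> nu). *)
Definition Delta (eta nu : seq2) : nat :=
  epsilon (inhabits 0%nat)
    (fun m => eta m <> nu m /\ forall k, (k < m)%nat -> eta k = nu k).

Definition d3 (eta nu : seq2) : R :=
  if excluded_middle_informative (eta = nu) then 0
  else / (3 ^ Delta eta nu).

Definition prefix (eta : seq2) (m : nat) : list bool :=
  map eta (seq 0 m).

Inductive T (A : nat -> Prop) : list bool -> Prop :=
  | T_nil : T A nil
  | T_zero : forall s, T A s -> T A (s ++ false :: nil)
  | T_one : forall s, T A s -> A (length s) -> T A (s ++ true :: nil).

Definition D (A : nat -> Prop) (eta : seq2) : Prop :=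
  forall m, T A (prefix eta m).

Definition infinite_nat (A : nat -> Prop) : Prop :=
  forall k, exists a, (k < a)%nat /\ A a.

Definition cond_star (A B : nat -> Prop) : Prop :=
  infinite_nat A /\ infinite_nat B /\
  forall n : nat, exists k : nat, forall a b : nat,
    A a -> B b -> (k < a)%nat -> (k < b)%nat ->
    INR a / INR b > INR n \/ INR b / INR a > INR n.

Definition infinite_set (X : seq2 -> Prop) : Prop :=
  ~ exists l : list seq2, forall x, X x -> In x l.

(* Main.v *)
Require Import Defs.
From Stdlib Require Import Reals Lra Lia List Classical ClassicalEpsilon FunctionalExtensionality Arith Wf_nat.
Open Scope R_scope.

Lemma Delta_spec x y : x <> y ->
  x (Defs.Delta x y) <> y (Defs.Delta x y) /\ forall k, (k < Defs.Delta x y)%nat -> x k = y k.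
Proof.
  intro H. unfold Defs.Delta. apply epsilon_spec.
  assert (E : exists i, x i <> y i).
  { apply not_all_ex_not. intro F. apply H. apply functional_extensionality. exact F. }
  destruct E as [i Hi]. revert Hi. induction i as [i IH] using lt_wf_ind. intros Hi.
  destruct (classic (forall k, (k < i)%nat -> x k = y k)) as [H0|H0].
  - exists i; auto.
  - apply not_all_ex_not in H0. destruct H0 as [k Hk]. apply imply_to_and in Hk.
    destruct Hk. eapply IH; eauto.
Qed.

Lemma T_snoc_true A s : T A (s ++ true :: nil) -> A (length s).
Proof.
  intro H. remember (s ++ true :: nil) as l. destruct H.
  - exfalso. apply app_cons_not_nil in Heql. auto.
  - apply app_inj_tail in Heql. destruct Heql. discriminate.
  - apply app_inj_tail in Heql. destruct Heql. subst. auto.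
Qed.

Lemma prefix_S eta m : prefix eta (S m) = prefix eta m ++ eta m :: nil.
Proof. unfold prefix. rewrite seq_S, map_app. reflexivity. Qed.

Lemma prefix_len eta m : length (prefix eta m) = m.
Proof. unfold prefix. rewrite length_map, length_seq. reflexivity. Qed.

Lemma D_bit A eta m : D A eta -> eta m = true -> A m.
Proof.
  intros HD He. specialize (HD (S m)). rewrite prefix_S, He in HD.
  apply T_snoc_true in HD. rewrite prefix_len in HD. exact HD.
Qed.

Lemma Delta_in A x y : D A x -> D A y -> x <> y -> A (Defs.Delta x y).
Proof.
  intros Hx Hy Hne. destruct (Delta_spec x y Hne) as [H1 _].
  destruct (x (Defs.Delta x y)) eqn:E.
  - exact (D_bit A x _ Hx E).
  - destruct (y (Defs.Delta x y)) eqn:E2; [exact (D_bit A y _ Hy E2)| congruence].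
Qed.

Lemma pig X : infinite_set X -> forall m, exists p : seq2,
  infinite_set (fun y => X y /\ forall j, (j < m)%nat -> y j = p j).
Proof.
  intros H m. induction m.
  - exists (fun _ => false). intros [l Hl]. apply H. exists l. intros x Hx.
    apply Hl. split; auto. intros; lia.
  - destruct IHm as [p Hp].
    destruct (classic (infinite_set (fun y => (X y /\ forall j, (j < m)%nat -> y j = p j) /\ y m = false))) as [H0|H0].
    + exists (fun j => if Nat.eqb j m then false else p j).
      intros [l Hl]. apply H0. exists l. intros y [[Hy1 Hy2] Hy3]. apply Hl. split; auto.
      intros j Hj. destruct (Nat.eqb_spec j m). subst; auto. apply Hy2; lia.
    + apply NNPP in H0. destruct H0 as [l0 Hl0].
      exists (fun j => if Nat.eqb j m then true else p j).
      intros [l1 Hl1]. apply Hp. exists (l0 ++ l1). intros y [Hy1 Hy2]. apply in_or_app.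
      destruct (y m) eqn:E.
      * right. apply Hl1. split; auto. intros j Hj. destruct (Nat.eqb_spec j m). subst; auto.
        apply Hy2; lia.
      * left. apply Hl0. auto.
Qed.

Lemma two (Y : seq2 -> Prop) : infinite_set Y -> exists x y, Y x /\ Y y /\ x <> y.
Proof.
  intro H. destruct (classic (exists x, Y x)) as [[x Hx]|Hn].
  - destruct (classic (exists y, Y y /\ y <> x)) as [[y [Hy Hne]]|Hn2].
    + exists x, y. auto.
    + exfalso. apply H. exists (x :: nil). intros z Hz. left.
      destruct (classic (z = x)); [auto| exfalso; apply Hn2; eauto].
  - exfalso. apply H. exists nil. intros z Hz. apply Hn. eauto.
Qed.

Lemma d3_ne x y : x <> y -> d3 x y = / 3 ^ Defs.Delta x y.
Proof. intro H. unfold d3. destruct excluded_middle_informative; [contradiction|reflexivity]. Qed.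

Lemma div_le2 a b : (0 < b)%nat -> (a <= 2 * b)%nat -> INR a / INR b <= INR 2.
Proof.
  intros. assert (0 < INR b) by (apply lt_0_INR; lia).
  apply (Rmult_le_reg_r (INR b)); auto. unfold Rdiv.
  rewrite Rmult_assoc, Rinv_l, Rmult_1_r by lra. rewrite <- mult_INR. apply le_INR; lia.
Qed.

Theorem lemma4p1 (A B : nat -> Prop) (HAB : cond_star A B)
  (X : seq2 -> Prop) (HXD : forall x, X x -> D A x) (HXinf : infinite_set X)
  (f : seq2 -> seq2) (Hf : forall x, X x -> D B (f x))
  (n : R) (Hn : n > 1) :
  exists x y, X x /\ X y /\ x <> y /\
    (d3 (f x) (f y) / d3 x y > n \/ d3 (f x) (f y) / d3 x y < / n).
Proof.
  destruct HAB as [_ [_ Hs]].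
  assert (Hc : exists c, n < 3 ^ c).
  { destruct (Pow_x_infinity 3 ltac:(rewrite Rabs_pos_eq; lra) (n + 1)) as [c Hc].
    exists c. specialize (Hc c (le_n c)). rewrite Rabs_pos_eq in Hc.
    lra. apply pow_le; lra. }
  destruct Hc as [c Hc].
  destruct (Hs 2%nat) as [k Hk].
  destruct (pig X HXinf (k + 2 * c + 1)) as [p Hp].
  destruct (two _ Hp) as [x [y [[Hx Hxp] [[Hy Hyp] Hne]]]].
  exists x, y. split; [auto|split; [auto|split; [auto|]]].
  set (a := Defs.Delta x y).
  assert (Ha : (k + 2 * c + 1 <= a)%nat).
  { destruct (le_lt_dec (k + 2 * c + 1) a); auto. exfalso.
    destruct (Delta_spec x y Hne) as [H1 _]. apply H1. fold a.
    rewrite Hxp, Hyp; auto. }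
  assert (HaA : A a) by (apply Delta_in; auto).
  assert (P3 : forall m, 0 < 3 ^ m) by (intro; apply pow_lt; lra).
  rewrite (d3_ne x y Hne). fold a.
  destruct (classic (f x = f y)) as [E|Hfne].
  - right. unfold d3. destruct excluded_middle_informative; [|contradiction].
    unfold Rdiv. rewrite Rmult_0_l. apply Rinv_0_lt_compat; lra.
  - rewrite (d3_ne _ _ Hfne). set (b := Defs.Delta (f x) (f y)).
    assert (HbB : B b) by (apply Delta_in; auto).
    assert (Hr : / 3 ^ b / / 3 ^ a = 3 ^ a / 3 ^ b).
    { pose proof (P3 a). pose proof (P3 b). field; split; lra. }
    rewrite Hr.
    destruct (le_lt_dec (b + c) a) as [L1|L1].
    + left. replace a with ((a - b) + b)%nat by lia. rewrite pow_add.
      replace (3 ^ (a - b) * 3 ^ b / 3 ^ b) with (3 ^ (a - b))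
        by (pose proof (P3 b); field; lra).
      assert (3 ^ c <= 3 ^ (a - b)) by (apply Rle_pow; lra || lia). lra.
    + destruct (le_lt_dec (a + c) b) as [L2|L2].
      * right. replace b with ((b - a) + a)%nat by lia. rewrite pow_add.
        replace (3 ^ a / (3 ^ (b - a) * 3 ^ a)) with (/ 3 ^ (b - a))
          by (pose proof (P3 a); pose proof (P3 (b - a)%nat); field; lra).
        assert (3 ^ c <= 3 ^ (b - a)) by (apply Rle_pow; lra || lia).
        apply Rle_lt_trans with (/ 3 ^ c).
        -- apply Rinv_le_contravar; auto.
        -- apply Rinv_lt_contravar; auto. apply Rmult_lt_0_compat; lra.
      * exfalso.
        destruct (Hk a b HaA HbB ltac:(lia) ltac:(lia)) as [G|G].
        -- pose proof (div_le2 a b ltac:(lia) ltac:(lia)). lra.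
        -- pose proof (div_le2 b a ltac:(lia) ltac:(lia)). lra.
Qed.
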